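(* Let $p$ be a prime, $m,e$ positive integers and $b\ge2$ an integer with $b<p^e$. Then $b+1\leq d_b(\mathcal{C}_i)\leq 2b$ for every $1\leq i\leq p^{e-1}$.
   Context: For $0\le i\le p^e$, $\mathcal{C}_i$ denotes the cyclic code $\langle (x-1)^i\rangle\subseteq \mathbb{F}_{p^m}[x]/\langle x^{p^e}-1\rangle$, with polynomials identified with their coefficient vectors in $\mathbb{F}_{p^m}^{p^e}$. For $c\in\mathbb{F}_{p^m}^{n}$, $\pi_b(c)$ is the list of the $n$ cyclically consecutive $b$-tuples $(c_j,\dots,c_{j+b-1})$ (indices mod $n$), $d_b(c,c')=d_H(\pi_b(c),\pi_b(c'))$, and $d_b(\mathcal{C})$ is the minimum of $d_b(c,c')$ over distinct $c,c'\in\mathcal{C}$. *)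

(* Defs.v *)
From HB Require Import structures.
From mathcomp Require Import all_boot all_order all_algebra.
Set Implicit Arguments. Unset Strict Implicit. Unset Printing Implicit Defensive.
Import GRing.Theory.
Local Open Scope ring_scope.

Section BSymbol.
Variable F : fieldType.
Variable n : nat.

Definition cyc (c : 'rV[F]_n) (t : nat) : F :=
  if (insub (t %% n)%N : option 'I_n) is Some k then c 0 k else 0.

Definition poly_of_word (c : 'rV[F]_n) : {poly F} := \poly_(j < n) cyc c j.

Definition bsym (b : nat) (c : 'rV[F]_n) (j : 'I_n) : {ffun 'I_b -> F} :=
  [ffun k : 'I_b => cyc c (j + k)%N].

(* membership in C_i = < (x-1)^i > inside F[x]/<x^n - 1>: c is the reduced
   representative of some multiple q (x-1)^i *)
Definition in_code (i : nat) (c : 'rV[F]_n) : Prop :=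
  exists q : {poly F}, poly_of_word c = (q * ('X - 1) ^+ i) %% ('X^n - 1).

Definition bdist (b : nat) (c c' : 'rV[F]_n) : nat :=
  #|[set j : 'I_n | bsym b c j != bsym b c' j]|.
End BSymbol.

(* Main.v *)
Require Import Defs.
From HB Require Import structures.
From mathcomp Require Import all_boot all_order all_algebra all_field.
From mathcomp Require Import zify.
Set Implicit Arguments. Unset Strict Implicit. Unset Printing Implicit Defensive.
Import GRing.Theory.
Local Open Scope ring_scope.

Section Aux.
Variable F : fieldType.
Variables n b : nat.
Hypothesis n_gt0 : (0 < n)%N.
Hypothesis b_gt0 : (0 < b)%N.
Hypothesis b_lt_n : (b < n)%N.

Definition md (t : nat) : 'I_n := Ordinal (ltn_pmod t n_gt0).

Lemma cycE (c : 'rV[F]_n) t : cyc c t = c 0 (md t).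
Proof.
rewrite /cyc; case: insubP => [u _ Hu | H]; first by congr (c 0 _); apply: val_inj.
by rewrite ltn_pmod in H.
Qed.

Lemma md_ord (j : 'I_n) : md j = j.
Proof. apply: val_inj => /=; exact: modn_small. Qed.

Definition fA (x : 'I_n) (k : 'I_b) : 'I_n := md (x + n - k).

Definition A (x : 'I_n) : {set 'I_n} := fA x @: [set: 'I_b].

Lemma mod2 t : (t < n + n)%N -> (t %% n = if t < n then t else t - n)%N.
Proof.
move=> Ht; case: (ltnP t n) => H; first exact: modn_small.
rewrite -[in LHS](subnK H) modnDr modn_small //; lia.
Qed.

Lemma memA x (j : 'I_n) : j \in A x <-> exists k : 'I_b, ((j + k) %% n)%N = x.
Proof.
have hb := b_lt_n.
split.
  case/imsetP=> k _ ->; exists k => /=.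
  have hk := ltn_ord k; have hx := ltn_ord x.
  rewrite modnDml subnK ?modnDr ?modn_small //; lia.
case=> k Hk; apply/imsetP; exists k => //; apply: val_inj => /=.
have hk := ltn_ord k; have hx := ltn_ord x; have hj := ltn_ord j.
rewrite -(modn_small hj); apply/eqP; rewrite -(eqn_modDr k) subnK; last lia.
by rewrite modnDr Hk modn_small.
Qed.

Lemma cardA x : #|A x| = b.
Proof.
rewrite card_imset ?cardsT ?card_ord //.
move=> k1 k2 /(congr1 val) /= H; apply: val_inj => /=.
have hb := b_lt_n; have h1 := ltn_ord k1; have h2 := ltn_ord k2; have hx := ltn_ord x.
move: H; rewrite !mod2; try lia.
by case: ifP; case: ifP; lia.
Qed.

Definition Jset (c c' : 'rV[F]_n) := [set j : 'I_n | bsym b c j != bsym b c' j].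

Lemma memJ (c c' : 'rV[F]_n) j :
  j \in Jset c c' <-> exists k : 'I_b, c 0 (md (j + k)) != c' 0 (md (j + k)).
Proof.
rewrite inE; split.
  move=> H; apply/existsP; apply: contraNT H => /existsPn H.
  by apply/eqP/ffunP => k; rewrite !ffunE !cycE; have := H k; rewrite negbK => /eqP.
move=> [k Hk]; apply: contra Hk => /eqP /ffunP /(_ k); rewrite !ffunE !cycE => ->.
by [].
Qed.

Lemma AsubJ (c c' : 'rV[F]_n) x : c 0 x != c' 0 x -> A x \subset Jset c c'.
Proof.
move=> Hx; apply/subsetP => j /memA [k Hk]; apply/memJ; exists k.
by have -> : md (j + k) = x by apply: val_inj.
Qed.

Lemma card_lb (J B : {set 'I_n}) j0 :
  B \subset J -> j0 \in J -> j0 \notin B -> (#|B|.+1 <= #|J|)%N.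
Proof.
move=> HB Hj Hn; have : j0 |: B \subset J by rewrite subUset sub1set Hj HB.
by move/subset_leq_card; rewrite cardsU1 Hn.
Qed.

Lemma lower (c c' : 'rV[F]_n) (s s' : 'I_n) : s != s' ->
  c 0 s != c' 0 s -> c 0 s' != c' 0 s' -> (b.+1 <= bdist b c c')%N.
Proof.
move=> ss' Hs Hs'; rewrite /bdist -/(Jset c c').
case: (boolP [exists k : 'I_b, ((s + 1 + k) %% n)%N == s']).
  case/existsP=> k /eqP Hk.
  rewrite -(cardA s); apply: (card_lb (j0 := md (s + 1))); first exact: AsubJ.
    apply/memJ; exists k.
    have -> : md (md (s + 1) + k) = s' by apply: val_inj => /=; rewrite -Hk modnDml.
    exact: Hs'.
  apply/negP => /memA [k' Hk'] /=; move: Hk'.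
  have := ltn_ord k'; have := ltn_ord s; have := b_lt_n => hb hs hk.
  rewrite modnDml mod2; last lia.
  by case: ifP; lia.
move/existsPn=> H.
rewrite -(cardA s'); apply: (card_lb (j0 := s)); first exact: AsubJ.
  apply/memJ; exists (Ordinal b_gt0); rewrite addn0 md_ord; exact: Hs.
apply/negP => /memA [k' Hk'].
case: (posnP k') => Hk0.
  by move: Hk'; rewrite Hk0 addn0 modn_small // => /val_inj E; rewrite E eqxx in ss'.
have Hlt : (k'.-1 < b)%N by have := ltn_ord k'; lia.
have := H (Ordinal Hlt); rewrite /= (_ : (s + 1 + k'.-1 = s + k')%N) ?Hk' ?eqxx //.
lia.
Qed.

Lemma JsubA (c c' : 'rV[F]_n) (x y : 'I_n) :
  (forall z, z != x -> z != y -> c 0 z = c' 0 z) ->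
  Jset c c' \subset A x :|: A y.
Proof.
move=> H; apply/subsetP => j /memJ [k Hk]; rewrite inE.
case: (eqVneq (md (j + k)) x) => [Ex|Nx].
  by apply/orP; left; apply/memA; exists k; rewrite -Ex.
case: (eqVneq (md (j + k)) y) => [Ey|Ny].
  by apply/orP; right; apply/memA; exists k; rewrite -Ey.
by rewrite H ?eqxx in Hk.
Qed.

Lemma upper (c c' : 'rV[F]_n) (x y : 'I_n) :
  (forall z, z != x -> z != y -> c 0 z = c' 0 z) -> (bdist b c c' <= 2 * b)%N.
Proof.
move=> H; rewrite /bdist -/(Jset c c').
apply: (leq_trans (subset_leq_card (JsubA H))).
apply: (leq_trans (leq_card_setU _ _)); rewrite !cardA; lia.
Qed.

Lemma poly_of_word1 (c : 'rV[F]_n) : (poly_of_word c).[1] = \sum_j c 0 j.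
Proof.
rewrite /poly_of_word horner_poly; apply: eq_bigr => j _.
by rewrite expr1n mulr1 cycE md_ord.
Qed.

Lemma code_sum i (c : 'rV[F]_n) : (0 < i)%N -> in_code i c -> \sum_j c 0 j = 0.
Proof.
move=> i0 [q Hq]; rewrite -poly_of_word1 Hq.
set a := q * _.
have : a.[1] = (a %/ ('X^n - 1) * ('X^n - 1) + a %% ('X^n - 1)).[1] by rewrite -divp_eq.
rewrite hornerD hornerM !hornerE expr1n subrr mulr0 add0r => <-.
by rewrite expr0n (gtn_eqF i0) mulr0.
Qed.

Lemma word_poly (P : {poly F}) : (size P <= n)%N ->
  poly_of_word (\row_(j < n) P`_j) = P.
Proof.
move=> HP; apply/polyP => k; rewrite /poly_of_word coef_poly.
case: ltnP => Hk.
  by rewrite cycE mxE /= modn_small.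
by rewrite nth_default //; apply: leq_trans HP Hk.
Qed.

End Aux.

Lemma frob_XsubC (F : finFieldType) (p m k : nat) : prime p -> #|F| = (p ^ m)%N ->
  ('X - 1 : {poly F}) ^+ (p ^ k)%N = 'X^(p ^ k)%N - 1.
Proof.
move=> pp cardF.
have chp : p \in [char {poly F}]%R by rewrite pchar_poly (card_finPcharP cardF pp).
have hn : [char {poly F}]%R.-nat (p ^ k)%N.
  rewrite pnatX; apply/orP; left; rewrite pnatE //.
have := exprDn_pchar ('X - 1 : {poly F}) 1 hn.
rewrite subrK expr1n => ->; by rewrite addrK.
Qed.

Theorem proposition2p6 (F : finFieldType) (p m e b i : nat) :
  prime p -> (0 < m)%N -> (0 < e)%N -> #|F| = (p ^ m)%N ->
  (2 <= b)%N -> (b < p ^ e)%N -> (1 <= i <= p ^ e.-1)%N ->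
  (* b + 1 <= d_b(C_i): every pair of distinct codewords is at b-distance >= b+1 *)
  (forall c c' : 'rV[F]_(p ^ e), in_code i c -> in_code i c' -> c != c' ->
     (b.+1 <= bdist b c c')%N) /\
  (* d_b(C_i) <= 2b: some pair of distinct codewords is at b-distance <= 2b *)
  (exists c c' : 'rV[F]_(p ^ e), [/\ in_code i c, in_code i c', c != c' &
     (bdist b c c' <= 2 * b)%N]).
Proof.
move=> pp m0 e0 cardF b2 bn /andP [i1 ih].
have p1 := prime_gt1 pp.
have n0 : (0 < p ^ e)%N by rewrite expn_gt0 prime_gt0.
have b0 : (0 < b)%N by lia.
split.
  move=> c c' Hc Hc' cc'.
  have [s Hs] : exists s, c 0 s != c' 0 s.
    apply/existsP; apply: contraNT cc' => /existsPn H; apply/eqP/matrixP => r j.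
    by rewrite [r]ord1; have := H j; rewrite negbK => /eqP.
  have [s' /andP [ss' Hs']] : exists s', (s' != s) && (c 0 s' != c' 0 s').
    apply/existsP; apply: contraNT Hs => /existsPn H.
    have S1 := code_sum n0 i1 Hc; have S2 := code_sum n0 i1 Hc'.
    have : \sum_j (c 0 j - c' 0 j) = 0 by rewrite sumrB S1 S2 subrr.
    rewrite (bigD1 s) //= big1 ?addr0. move=> /eqP; rewrite subr_eq0 => ->. by []. 
    move=> j js; apply/eqP; rewrite subr_eq0; have := H j; rewrite js /= negbK //.
  by apply: (lower n0 b0 bn (s := s) (s' := s')) => //; rewrite eq_sym.
set h := (p ^ e.-1)%N.
have h0 : (0 < h)%N by rewrite expn_gt0 prime_gt0.
have hn : (h < p ^ e)%N by rewrite ltn_exp2l //; lia.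
set P : {poly F} := 'X^h - 1.
have sP : size P = h.+1 by rewrite size_Xn_sub_1.
exists (\row_(j < p ^ e) P`_j), 0; split.
- exists (('X - 1) ^+ (h - i)); rewrite word_poly // ?sP //.
  rewrite -exprD subnK // (frob_XsubC _ pp cardF) modp_small //.
  by rewrite sP size_Xn_sub_1.
- exists 0; rewrite mul0r mod0p; apply/polyP => k.
  by rewrite /poly_of_word coef_poly coef0 cycE // mxE; case: ifP.
- apply/eqP => /matrixP /(_ 0 (md n0 0)); rewrite !mxE /= mod0n.
  rewrite /P coefB coefXn coef1 /= eq_sym (gtn_eqF h0) sub0r => /eqP.
  by rewrite oppr_eq0 oner_eq0.
  apply: (@upper _ _ _ n0 b0 bn _ _ (md n0 0) (md n0 h)) => z zx zy.
  rewrite !mxE /P coefB coefXn coef1.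
  have -> : (z == h :> nat) = false.
    by apply/negP => /eqP E; move: zy; rewrite (_ : md n0 h = z) ?eqxx //; apply: val_inj; rewrite /= E modn_small.
  have -> : (z == 0 :> nat) = false.
    by apply/negP => /eqP E; move: zx; rewrite (_ : md n0 0 = z) ?eqxx //; apply: val_inj; rewrite /= E mod0n.
  by rewrite subrr.
Qed.
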